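(* Let $f$ be a biderivation of $\mathcal{SV}(0)$, and let $\phi,\psi:\mathcal{SV}(0)\to\mathcal{SV}(0)$ be linear maps and $\rho_1,\rho_2,\rho_3,\theta_1,\theta_2,\theta_3$ linear complex-valued functions on $\mathcal{SV}(0)$ such that for all $x,y$, $$f(x,y)=\sum_{i=1}^3\rho_i(x)D_i(y)+[\phi(x),y]=\sum_{i=1}^3\theta_i(y)D_i(x)+[x,\psi(y)].$$ Let $\lambda\in\mathbb{C}$ be such that $\phi(L_m)-\lambda L_m\in\mathfrak{M}$ and $\psi(L_m)-\lambda L_m\in\mathfrak{M}$ for all $m\in\mathbb{Z}$ (such $\lambda$ exists). Then for every $n\in\mathbb{Z}$ there are $c_0^{(n)},r_0^{(n)}\in\mathbb{C}$ with $$\phi(Y_n)=\lambda Y_n+c_0^{(n)}M_0,\qquad \psi(Y_n)=\lambda Y_n+r_0^{(n)}M_0,$$ and moreover $\rho_i(Y_n)=\theta_i(Y_n)=0$ for $i=1,2,3$ and $\rho_3(L_n)=\theta_3(L_n)=0$, for all $n\in\mathbb{Z}$.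
   Context: $\mathcal{SV}(0)$ is the complex Lie algebra with basis $\{L_i,Y_i,M_i\mid i\in\mathbb{Z}\}$ and brackets $[L_m,L_n]=(m-n)L_{m+n}$, $[L_m,Y_n]=(\frac12 m-n)Y_{m+n}$, $[L_m,M_n]=-nM_{m+n}$, $[Y_m,Y_n]=(m-n)M_{m+n}$, $[Y_m,M_n]=[M_m,M_n]=0$; $\mathfrak{M}=\bigoplus_{i\in\mathbb{Z}}\mathbb{C}M_i$. A biderivation of a Lie algebra $L$ is a bilinear map $f:L\times L\to L$ with $f([x,y],z)=[x,f(y,z)]+[f(x,z),y]$ and $f(x,[y,z])=[f(x,y),z]+[y,f(x,z)]$ for all $x,y,z\in L$. The linear maps $D_1,D_2,D_3$ are defined by $D_1(L_m)=M_m$, $D_1(Y_m)=D_1(M_m)=0$; $D_2(L_m)=mM_m$, $D_2(Y_m)=D_2(M_m)=0$; $D_3(L_m)=0$, $D_3(Y_m)=Y_m$, $D_3(M_m)=2M_m$. *)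

(* Defs.v *)
(* SV(0) is modelled as the free C-vector space on the
   basis {L_i, Y_i, M_i | i in Z}, i.e. finitely supported functions
   (gen * int) -> C, using multinomials' monalg {malg C[K]}.
   C = complex R (= R[i]) for an arbitrary real closed field R
   (the genuine complex numbers are the instance R = reals). *)
From HB Require Import structures.
From mathcomp Require Import all_boot all_order all_algebra.
From mathcomp Require Import complex.
From mathcomp Require Import finmap.
From mathcomp.multinomials Require Import monalg.
Set Implicit Arguments. Unset Strict Implicit. Unset Printing Implicit Defensive.
Import Order.TTheory GRing.Theory Num.Theory.
Local Open Scope ring_scope.

Inductive gen := GL | GY | GM.
Definition gen_code (g : gen) : nat := match g with GL => 0 | GY => 1 | GM => 2 end.
Definition gen_decode (n : nat) : option gen :=
  match n with 0 => Some GL | 1 => Some GY | 2 => Some GM | _ => None end%N.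
Lemma gen_codeK : pcancel gen_code gen_decode. Proof. by case. Qed.
HB.instance Definition _ := Countable.copy gen (pcan_type gen_codeK).

Section SV0.
Variable R : rcfType.
Local Notation C := (complex R).

Definition SVidx := (gen * int)%type.
Definition SV0 := {malg C[SVidx]}.

Definition bvec (g : gen) (i : int) : SV0 := << (g, i) >>.
Definition L (i : int) : SV0 := bvec GL i.
Definition Y (i : int) : SV0 := bvec GY i.
Definition M (i : int) : SV0 := bvec GM i.

Definition lin_ext (h : SVidx -> SV0) (x : SV0) : SV0 :=
  \sum_(k <- msupp x) x@_k *: h k.

Definition br_basis (a b : SVidx) : SV0 :=
  let m := a.2 in let n := b.2 in
  match a.1, b.1 with
  | GL, GL => (m - n)%:~R *: L (m + n)
  | GL, GY => ((m%:~R / 2%:R) - n%:~R) *: Y (m + n)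
  | GY, GL => - (((n%:~R / 2%:R) - m%:~R) *: Y (m + n))
  | GL, GM => (- n)%:~R *: M (m + n)
  | GM, GL => - ((- m)%:~R *: M (m + n))
  | GY, GY => (m - n)%:~R *: M (m + n)
  | _, _ => 0
  end.

Definition lie (x y : SV0) : SV0 :=
  \sum_(a <- msupp x) \sum_(b <- msupp y) (x@_a * y@_b) *: br_basis a b.

Definition inMM (v : SV0) : Prop := forall k, k \in msupp v -> k.1 = GM.

Definition D1 : SV0 -> SV0 :=
  lin_ext (fun k => if k.1 is GL then M k.2 else 0).
Definition D2 : SV0 -> SV0 :=
  lin_ext (fun k => if k.1 is GL then k.2%:~R *: M k.2 else 0).
Definition D3 : SV0 -> SV0 :=
  lin_ext (fun k => match k.1 with GL => 0 | GY => Y k.2 | GM => 2%:R *: M k.2 end).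

Definition is_linmap (h : SV0 -> SV0) : Prop :=
  forall (a : C) (x y : SV0), h (a *: x + y) = a *: h x + h y.
Definition is_linfun (h : SV0 -> C) : Prop :=
  forall (a : C) (x y : SV0), h (a *: x + y) = a * h x + h y.

Definition is_bilinear (f : SV0 -> SV0 -> SV0) : Prop :=
  (forall z, is_linmap (fun x => f x z)) /\ (forall x, is_linmap (f x)).
Definition is_biderivation (f : SV0 -> SV0 -> SV0) : Prop :=
  [/\ is_bilinear f,
      (forall x y z, f (lie x y) z = lie x (f y z) + lie (f x z) y) &
      (forall x y z, f x (lie y z) = lie (f x y) z + lie y (f x z))].
End SV0.

(* Main.v *)
Require Import Defs.
From HB Require Import structures.
From mathcomp Require Import all_boot all_order all_algebra zify.
From mathcomp Require Import complex.
From mathcomp Require Import finmap.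
From mathcomp.multinomials Require Import monalg.
Import Order.TTheory GRing.Theory Num.Theory.
Local Open Scope ring_scope.

Section H.
Variable R : rcfType.
Local Notation C := (complex R).
Local Notation SV := (SV0 R).

Lemma msuppB1 (k : SVidx) : msupp (<< k >> : SV) = [fset k]%fset.
Proof. by rewrite msuppU oner_eq0. Qed.

Lemma coefB1 (k q : SVidx) : (<< k >> : SV)@_q = (k == q)%:R.
Proof. by rewrite mcoeffU. Qed.

Lemma sum_single (v : SV) (G : SVidx -> C) b0 :
  (forall b, b != b0 -> G b = 0) ->
  \sum_(b <- msupp v) v@_b * G b = v@_b0 * G b0.
Proof.
move=> HG; case: (boolP (b0 \in msupp v)) => Hb.
  rewrite (bigD1_seq b0) //= ?fset_uniq // big1 ?addr0 // => b /HG ->.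
  by rewrite mulr0.
rewrite big_seq big1 ?(mcoeff_outdom Hb) ?mul0r // => b Hbv.
have /HG -> : b != b0 by apply: contraNneq Hb => <-.
by rewrite mulr0.
Qed.

Lemma coef_lie_right (v : SV) b q :
  (lie v << b >>)@_q = \sum_(a <- msupp v) v@_a * (br_basis R a b)@_q.
Proof.
rewrite /lie raddf_sum; apply: eq_bigr => a _.
rewrite msuppB1 big_seq_fset1. by rewrite /= mcoeffZ coefB1 eqxx mulr1.
Qed.

Lemma coef_lie_left (v : SV) a q :
  (lie << a >> v)@_q = \sum_(b <- msupp v) v@_b * (br_basis R a b)@_q.
Proof.
rewrite /lie msuppB1 big_seq_fset1 raddf_sum; apply: eq_bigr => b _ /=.
by rewrite mcoeffZ coefB1 eqxx mul1r.
Qed.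

Lemma lin_ext1 h k : lin_ext h (<< k >> : SV) = h k.
Proof. by rewrite /lin_ext msuppB1 big_seq_fset1 coefB1 eqxx scale1r. Qed.
Ltac closer := by rewrite ?mulr0n ?mulr0 ?oppr0 ?mul0r //= ?mulr0n ?mulr0 ?oppr0 ?mul0r.
Ltac solve_side :=
  first [closer | (case: eqP => HH; [exfalso; match goal with H : is_true (_ != _) |- _ => move: H end; rewrite xpair_eqE /=; move/eqP; lia
                   | closer])].
Ltac solve_main :=
  first [closer | (case: eqP => HH; [by rewrite ?mulr1 ?mulr1n | exfalso; lia])].

Ltac coefL b0 := rewrite coef_lie_left (sum_single _ _ b0) => [|[[] j] Hb];
  rewrite /br_basis /L /Y /M /bvec /= ?mcoeff0 ?mcoeffN ?mcoeffZ ?coefB1 ?xpair_eqE /=;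
  first [solve_main | solve_side].
Ltac coefR b0 := rewrite coef_lie_right (sum_single _ _ b0) => [|[[] j] Hb];
  rewrite /br_basis /L /Y /M /bvec /= ?mcoeff0 ?mcoeffN ?mcoeffZ ?coefB1 ?xpair_eqE /=;
  first [solve_main | solve_side].

Lemma cLl_L m (v : SV) p : (lie (L R m) v)@_(GL,p) = v@_(GL,p-m) * (m - (p-m))%:~R.
Proof. coefL (GL, p - m). Qed.
Lemma cLl_Y m (v : SV) p : (lie (L R m) v)@_(GY,p) = v@_(GY,p-m) * (m%:~R / 2%:R - (p-m)%:~R).
Proof. coefL (GY, p - m). Qed.
Lemma cLl_M m (v : SV) p : (lie (L R m) v)@_(GM,p) = v@_(GM,p-m) * (- (p-m))%:~R.
Proof. coefL (GM, p - m). Qed.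
Lemma cYr_L k (v : SV) p : (lie v (Y R k))@_(GL,p) = 0.
Proof. rewrite -(mulr0 (v@_(GL,p))). coefR (GL, p). Qed.
Lemma cYr_Y k (v : SV) p : (lie v (Y R k))@_(GY,p) = v@_(GL,p-k) * ((p-k)%:~R / 2%:R - k%:~R).
Proof. coefR (GL, p - k). Qed.
Lemma cYr_M k (v : SV) p : (lie v (Y R k))@_(GM,p) = v@_(GY,p-k) * ((p-k) - k)%:~R.
Proof. coefR (GY, p - k). Qed.
Lemma cLr_L m (v : SV) p : (lie v (L R m))@_(GL,p) = v@_(GL,p-m) * ((p-m) - m)%:~R.
Proof. coefR (GL, p - m). Qed.
Lemma cLr_Y m (v : SV) p : (lie v (L R m))@_(GY,p) = v@_(GY,p-m) * - (m%:~R / 2%:R - (p-m)%:~R).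
Proof. coefR (GY, p - m). Qed.
Lemma cLr_M m (v : SV) p : (lie v (L R m))@_(GM,p) = v@_(GM,p-m) * - (- (p-m))%:~R.
Proof. coefR (GM, p - m). Qed.
Lemma cYl_L k (v : SV) p : (lie (Y R k) v)@_(GL,p) = 0.
Proof. rewrite -(mulr0 (v@_(GL,p))). coefL (GL, p). Qed.
Lemma cYl_Y k (v : SV) p : (lie (Y R k) v)@_(GY,p) = v@_(GL,p-k) * - ((p-k)%:~R / 2%:R - k%:~R).
Proof. coefL (GL, p - k). Qed.
Lemma cYl_M k (v : SV) p : (lie (Y R k) v)@_(GM,p) = v@_(GY,p-k) * (k - (p-k))%:~R.
Proof. coefL (GY, p - k). Qed.

Lemma shiftI (m j : int) : m + j - m = j.
Proof. lia. Qed.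

Lemma D1Y k : D1 (Y R k) = 0. Proof. by rewrite /D1 /Y /bvec lin_ext1. Qed.
Lemma D2Y k : D2 (Y R k) = 0. Proof. by rewrite /D2 /Y /bvec lin_ext1. Qed.
Lemma D3Y k : D3 (Y R k) = Y R k. Proof. by rewrite /D3 /Y /bvec lin_ext1. Qed.
Lemma D1L k : D1 (L R k) = M R k. Proof. by rewrite /D1 /L /bvec lin_ext1. Qed.
Lemma D2L k : D2 (L R k) = k%:~R *: M R k. Proof. by rewrite /D2 /L /bvec lin_ext1. Qed.
Lemma D3L k : D3 (L R k) = 0. Proof. by rewrite /D3 /L /bvec lin_ext1. Qed.

Lemma cb g i g' p : (bvec R g i)@_(g', p) = ((g == g') && (i == p))%:R.
Proof. by rewrite /bvec coefB1 xpair_eqE. Qed.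

Lemma inMM_GL (w : SV) p : inMM w -> w@_(GL,p) = 0.
Proof. move=> H; apply/eqP; rewrite mcoeff_eq0; apply/negP => /H //. Qed.
Lemma inMM_GY (w : SV) p : inMM w -> w@_(GY,p) = 0.
Proof. move=> H; apply/eqP; rewrite mcoeff_eq0; apply/negP => /H //. Qed.

Lemma uL (u : SV) lam m p : inMM (u - lam *: L R m) -> u@_(GL,p) = lam * (m == p)%:R.
Proof.
move=> /(inMM_GL _ p) /eqP; rewrite mcoeffB mcoeffZ subr_eq0 => /eqP ->.
by rewrite /L cb.
Qed.
Lemma uY (u : SV) lam m p : inMM (u - lam *: L R m) -> u@_(GY,p) = 0.
Proof.
move=> /(inMM_GY _ p) /eqP; rewrite mcoeffB mcoeffZ subr_eq0 => /eqP ->.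
by rewrite /L cb /= mulr0.
Qed.

Lemma halfE (a b : int) : (a%:~R / 2%:R - b%:~R : C) = (a - 2 * b)%:~R / 2%:R.
Proof.
rewrite rmorphB /= rmorphM /= mulrBl; congr (_ - _).
have h2 : (2%:R : C) != 0 by rewrite pnatr_eq0.
rewrite -mulrA mulrC -mulrA (mulrC _ 2%:~R) -[2%:~R]/(2%:R : C) mulfV // mulr1.
done.
Qed.
Lemma coef4 (a b c : C) (x y z w : SV) q :
  (a *: x + b *: y + c *: z + w)@_q = a * x@_q + b * y@_q + c * z@_q + w@_q.
Proof.
exact: (etrans (mcoeffD q (a *: x + b *: y + c *: z) w) (congr2 +%R
  (etrans (mcoeffD q (a *: x + b *: y) (c *: z)) (congr2 +%R
    (etrans (mcoeffD q (a *: x) (b *: y)) (congr2 +%R (mcoeffZ a x q) (mcoeffZ b y q)))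
    (mcoeffZ c z q))) (erefl _))).
Qed.
Lemma half_ne0 (z : int) : z != 0 -> (z%:~R / 2%:R : C) != 0.
Proof.
move=> hz; rewrite mulf_eq0 negb_or intr_eq0 hz /= invr_eq0.
by rewrite pnatr_eq0.
Qed.
Lemma cancel_int' (x : C) (z : int) : z != 0 -> x * z%:~R = 0 -> x = 0.
Proof. by move=> hz /eqP; rewrite mulf_eq0 intr_eq0 (negbTE hz) orbF => /eqP. Qed.
Lemma cancel_intN (x : C) (z : int) : z != 0 -> x * - z%:~R = 0 -> x = 0.
Proof. move=> hz /eqP; rewrite mulrN oppr_eq0 => /eqP; exact: cancel_int'. Qed.
Lemma cancel_half (x : C) (z : int) : z != 0 -> x * (z%:~R / 2%:R) = 0 -> x = 0.
Proof. by move=> /half_ne0 hz /eqP; rewrite mulf_eq0 (negbTE hz) orbF => /eqP. Qed.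
Lemma cancel_halfN (x : C) (z : int) : z != 0 -> x * - (z%:~R / 2%:R) = 0 -> x = 0.
Proof. move=> hz /eqP; rewrite mulrN oppr_eq0 => /eqP; exact: cancel_half. Qed.
Lemma cancel2 (a b : C) (z : int) : z != 0 -> a * (z%:~R / 2%:R) = b * (z%:~R / 2%:R) -> a = b.
Proof. by move=> /half_ne0 hz; apply: mulIf. Qed.
Definition simpC := (mulr0n, mulr1n, mulr0, mul0r, mulr1, mul1r, addr0, add0r, oppr0, subr0, mulr0z).
Lemma gne1 : (GM == GY) = false. Proof. by []. Qed.
Lemma gne2 : (GY == GM) = false. Proof. by []. Qed.
Lemma gne3 : (GM == GL) = false. Proof. by []. Qed.
Lemma gne4 : (GY == GL) = false. Proof. by []. Qed.
Definition gsimp := (gne1, gne2, gne3, gne4, eqxx, andTb, andFb).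
Lemma coef2 (a c : C) (x y : SV) q : (a *: x + c *: y)@_q = a * x@_q + c * y@_q.
Proof. exact: (etrans (mcoeffD q (a *: x) (c *: y)) (congr2 +%R (mcoeffZ a x q) (mcoeffZ c y q))). Qed.
Lemma coefYM_L (a c : C) k j : (a *: Y R k + c *: M R 0)@_(GL,j) = 0.
Proof. by rewrite coef2 /Y /M !cb !gsimp !simpC. Qed.
Lemma coefYM_Y (a c : C) k j : (a *: Y R k + c *: M R 0)@_(GY,j) = a * (k == j)%:R.
Proof. by rewrite coef2 /Y /M !cb !gsimp !simpC. Qed.
Lemma coefYM_M (a c : C) k j : (a *: Y R k + c *: M R 0)@_(GM,j) = c * ((0:int) == j)%:R.
Proof. by rewrite coef2 /Y /M !cb !gsimp !simpC. Qed.
End H.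
Arguments uL {R u lam m p}.
Arguments uY {R u lam m p}.

Section Main.
Variable R : rcfType.
Local Notation C := (complex R).
Local Notation SV := (SV0 R).
Variables (phi psi : SV -> SV) (rho1 rho2 rho3 th1 th2 th3 : SV -> C) (lam : C).
Hypothesis E : forall x y,
  rho1 x *: D1 y + rho2 x *: D2 y + rho3 x *: D3 y + lie (phi x) y =
  th1 y *: D1 x + th2 y *: D2 x + th3 y *: D3 x + lie x (psi y).
Hypothesis Hphi : forall m : int, inMM (phi (L R m) - lam *: L R m).
Hypothesis Hpsi : forall m : int, inMM (psi (L R m) - lam *: L R m).

Lemma EqA m k q :
  rho3 (L R m) * (Y R k)@_q + (lie (phi (L R m)) (Y R k))@_q =
  th1 (Y R k) * (M R m)@_q + th2 (Y R k) * (m%:~R * (M R m)@_q) + (lie (L R m) (psi (Y R k)))@_q.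
Proof.
have H := congr1 (mcoeff q) (E (L R m) (Y R k)).
have H' := (@coef4 R (rho1 (L R m)) (rho2 (L R m)) (rho3 (L R m)) (D1 (Y R k)) (D2 (Y R k)) (D3 (Y R k)) (lie (phi (L R m)) (Y R k)) q).
have H3 := etrans (esym H') H.
have H'' := (@coef4 R (th1 (Y R k)) (th2 (Y R k)) (th3 (Y R k)) (D1 (L R m)) (D2 (L R m)) (D3 (L R m)) (lie (L R m) (psi (Y R k))) q).
have {H3} H4 := etrans H3 H''.
rewrite D1Y D2Y D3Y D1L D2L D3L in H4.
rewrite !mcoeff0 in H4.
rewrite mcoeffZ in H4. 
rewrite !mulr0 !add0r addr0 in H4.
exact H4.
Qed.

Lemma cancel_int (x : C) (z : int) : z != 0 -> x * z%:~R = 0 -> x = 0.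
Proof. by move=> hz /eqP; rewrite mulf_eq0 intr_eq0 (negbTE hz) orbF => /eqP. Qed.

Lemma useA (x1 x3 x4 x5 y1 y2 y3 y4 y5 y1' y2' y3' y4' y5' : C) :
  x1 * y1 + y2 = x3 * y3 + x4 * (x5 * y4) + y5 ->
  y1 = y1' -> y2 = y2' -> y3 = y3' -> y4 = y4' -> y5 = y5' ->
  x1 * y1' + y2' = x3 * y3' + x4 * (x5 * y4') + y5'.
Proof. by move=> H <- <- <- <- <-. Qed.
Arguments useA {x1 x3 x4 x5 y1 y2 y3 y4 y5 y1' y2' y3' y4' y5'}.

Lemma EqA_GL m k j : 0 = (psi (Y R k))@_(GL,j) * (m - j)%:~R.
Proof.
have e1 : (Y R k)@_(GL, m+j) = 0 by rewrite /Y cb.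
have e3 : (M R m)@_(GL, m+j) = 0 by rewrite /M cb.
have e5 : (lie (L R m) (psi (Y R k)))@_(GL,m+j) = (psi (Y R k))@_(GL,j) * (m - j)%:~R.
  by rewrite cLl_L shiftI.
have := useA (EqA m k (GL,m+j)) e1 (cYr_L _ _ _ _) e3 e3 e5.
by rewrite !mulr0 !add0r.
Qed.

Lemma EqB m k q :
  rho1 (Y R k) * (M R m)@_q + rho2 (Y R k) * (m%:~R * (M R m)@_q) + (lie (phi (Y R k)) (L R m))@_q =
  th3 (L R m) * (Y R k)@_q + (lie (Y R k) (psi (L R m)))@_q.
Proof.
have H := congr1 (mcoeff q) (E (Y R k) (L R m)).
have H' := (@coef4 R (rho1 (Y R k)) (rho2 (Y R k)) (rho3 (Y R k)) (D1 (L R m)) (D2 (L R m)) (D3 (L R m)) (lie (phi (Y R k)) (L R m)) q).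
have H3 := etrans (esym H') H.
have H'' := (@coef4 R (th1 (L R m)) (th2 (L R m)) (th3 (L R m)) (D1 (Y R k)) (D2 (Y R k)) (D3 (Y R k)) (lie (Y R k) (psi (L R m))) q).
have {H3} H4 := etrans H3 H''.
rewrite D1Y D2Y D3Y D1L D2L D3L in H4.
rewrite !mcoeff0 mcoeffZ in H4.
rewrite !mulr0 addr0 !add0r in H4.
exact H4.
Qed.

Lemma EqC n k q :
  rho3 (Y R n) * (Y R k)@_q + (lie (phi (Y R n)) (Y R k))@_q =
  th3 (Y R k) * (Y R n)@_q + (lie (Y R n) (psi (Y R k)))@_q.
Proof.
have H := congr1 (mcoeff q) (E (Y R n) (Y R k)).
have H' := (@coef4 R (rho1 (Y R n)) (rho2 (Y R n)) (rho3 (Y R n)) (D1 (Y R k)) (D2 (Y R k)) (D3 (Y R k)) (lie (phi (Y R n)) (Y R k)) q).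
have H3 := etrans (esym H') H.
have H'' := (@coef4 R (th1 (Y R k)) (th2 (Y R k)) (th3 (Y R k)) (D1 (Y R n)) (D2 (Y R n)) (D3 (Y R n)) (lie (Y R n) (psi (Y R k))) q).
have {H3} H4 := etrans H3 H''.
rewrite !D1Y !D2Y !D3Y in H4.
rewrite !mcoeff0 in H4.
rewrite !mulr0 !add0r in H4.
exact H4.
Qed.

Lemma useB (x1 x2 x3 x4 y1 y2 y3 y4 y5 y1' y2' y3' y4' y5' : C) :
  x1 * y1 + x2 * (x3 * y2) + y3 = x4 * y4 + y5 ->
  y1 = y1' -> y2 = y2' -> y3 = y3' -> y4 = y4' -> y5 = y5' ->
  x1 * y1' + x2 * (x3 * y2') + y3' = x4 * y4' + y5'.
Proof. by move=> H <- <- <- <- <-. Qed.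
Arguments useB {x1 x2 x3 x4 y1 y2 y3 y4 y5 y1' y2' y3' y4' y5'}.
Lemma useC (x1 x2 y1 y2 y3 y4 y1' y2' y3' y4' : C) :
  x1 * y1 + y2 = x2 * y3 + y4 ->
  y1 = y1' -> y2 = y2' -> y3 = y3' -> y4 = y4' ->
  x1 * y1' + y2' = x2 * y3' + y4'.
Proof. by move=> H <- <- <- <-. Qed.
Arguments useC {x1 x2 y1 y2 y3 y4 y1' y2' y3' y4'}.

Lemma EqA_GM m k j : 0 = th1 (Y R k) * (m == m + j)%:R + th2 (Y R k) * (m%:~R * (m == m + j)%:R)
   + (psi (Y R k))@_(GM,j) * (- j)%:~R.
Proof.
have e1 : (Y R k)@_(GM, m+j) = 0 by rewrite /Y cb.
have e2 : (lie (phi (L R m)) (Y R k))@_(GM, m+j) = 0 by rewrite cYr_M (uY (Hphi m)) mul0r.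
have e3 : (M R m)@_(GM, m+j) = (m == m + j)%:R by rewrite /M cb.
have e5 : (lie (L R m) (psi (Y R k)))@_(GM,m+j) = (psi (Y R k))@_(GM,j) * (- j)%:~R.
  by rewrite cLl_M shiftI.
have := useA (EqA m k (GM,m+j)) e1 e2 e3 e3 e5.
by rewrite mulr0 addr0.
Qed.

Lemma EqA_GY m k j : rho3 (L R m) * (k == m + j)%:R
   + lam * (m == m + j - k)%:R * ((m + j - k)%:~R / 2%:R - k%:~R)
   = (psi (Y R k))@_(GY,j) * (m%:~R / 2%:R - j%:~R).
Proof.
have e1 : (Y R k)@_(GY, m+j) = (k == m + j)%:R by rewrite /Y cb.
have e2 : (lie (phi (L R m)) (Y R k))@_(GY, m+j) = lam * (m == m + j - k)%:R * ((m + j - k)%:~R / 2%:R - k%:~R).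
  by rewrite cYr_Y (uL (Hphi m)).
have e3 : (M R m)@_(GY, m+j) = 0 by rewrite /M cb.
have e5 : (lie (L R m) (psi (Y R k)))@_(GY,m+j) = (psi (Y R k))@_(GY,j) * (m%:~R / 2%:R - j%:~R).
  by rewrite cLl_Y shiftI.
have := useA (EqA m k (GY,m+j)) e1 e2 e3 e3 e5.
by rewrite !mulr0 !add0r.
Qed.

Lemma EqB_GL m k j : (phi (Y R k))@_(GL,j) * (j - m)%:~R = 0.
Proof.
have e1 : (M R m)@_(GL, m+j) = 0 by rewrite /M cb.
have e3 : (lie (phi (Y R k)) (L R m))@_(GL, m+j) = (phi (Y R k))@_(GL,j) * (j - m)%:~R.
  by rewrite cLr_L !shiftI.
have e4 : (Y R k)@_(GL, m+j) = 0 by rewrite /Y cb.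
have := useB (EqB m k (GL,m+j)) e1 e1 e3 e4 (cYl_L _ _ _ _).
by rewrite !mulr0 !add0r ?addr0.
Qed.

Lemma EqB_GM m k j : rho1 (Y R k) * (m == m + j)%:R + rho2 (Y R k) * (m%:~R * (m == m + j)%:R)
   + (phi (Y R k))@_(GM,j) * - (- j)%:~R = 0.
Proof.
have e1 : (M R m)@_(GM, m+j) = (m == m + j)%:R by rewrite /M cb.
have e3 : (lie (phi (Y R k)) (L R m))@_(GM, m+j) = (phi (Y R k))@_(GM,j) * - (- j)%:~R.
  by rewrite cLr_M !shiftI.
have e4 : (Y R k)@_(GM, m+j) = 0 by rewrite /Y cb.
have e5 : (lie (Y R k) (psi (L R m)))@_(GM, m+j) = 0 by rewrite cYl_M (uY (Hpsi m)) mul0r.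
have := useB (EqB m k (GM,m+j)) e1 e1 e3 e4 e5.
by rewrite mulr0 addr0.
Qed.

Lemma EqB_GY m k j : (phi (Y R k))@_(GY,j) * - (m%:~R / 2%:R - j%:~R) =
   th3 (L R m) * (k == m + j)%:R
   + lam * (m == m + j - k)%:R * - ((m + j - k)%:~R / 2%:R - k%:~R).
Proof.
have e1 : (M R m)@_(GY, m+j) = 0 by rewrite /M cb.
have e3 : (lie (phi (Y R k)) (L R m))@_(GY, m+j) = (phi (Y R k))@_(GY,j) * - (m%:~R / 2%:R - j%:~R).
  by rewrite cLr_Y !shiftI.
have e4 : (Y R k)@_(GY, m+j) = (k == m + j)%:R by rewrite /Y cb.
have e5 : (lie (Y R k) (psi (L R m)))@_(GY, m+j) = lam * (m == m + j - k)%:R * - ((m + j - k)%:~R / 2%:R - k%:~R).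
  by rewrite cYl_Y (uL (Hpsi m)).
have := useB (EqB m k (GY,m+j)) e1 e1 e3 e4 e5.
by rewrite !mulr0 !add0r.
Qed.

Lemma psiL k j : (psi (Y R k))@_(GL,j) = 0.
Proof.
apply: (@cancel_int' _ _ (j + 1 - j)); first lia.
exact: esym (EqA_GL (j+1) k j).
Qed.

Lemma psiM k j : j != 0 -> (psi (Y R k))@_(GM,j) = 0.
Proof.
move=> hj; apply: (@cancel_int' _ _ (- j)); first lia.
have := EqA_GM 0 k j.
have -> : (0 == 0 + j) = false by lia.
by rewrite !simpC.
Qed.

Lemma th1Y k : th1 (Y R k) = 0.
Proof.
have := EqA_GM 0 k 0.
have -> : ((0:int) == 0 + 0) = true by lia.
by rewrite !simpC.
Qed.

Lemma th2Y k : th2 (Y R k) = 0.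
Proof.
have := EqA_GM 1 k 0.
have -> : ((1:int) == 1 + 0) = true by lia.
by rewrite th1Y !simpC.
Qed.

Lemma psiY k j : j != k -> (psi (Y R k))@_(GY,j) = 0.
Proof.
move=> hjk.
have [m [h1 h2]] : exists m : int, (k == m + j) = false /\ (m - 2 * j != 0).
  case: (boolP (k == 3 * j + 1)) => h; [exists (2*j+2) | exists (2*j+1)]; split; lia.
apply: (@cancel_half _ _ (m - 2 * j) h2).
have := EqA_GY m k j.
have h3 : (m == m + j - k) = false by lia.
by rewrite h1 h3 !simpC halfE => <-.
Qed.

Lemma psiYk k : (psi (Y R k))@_(GY,k) = lam.
Proof.
have := EqA_GY 1 k k.
have -> : (k == 1 + k) = false by lia.
have -> : ((1:int) == 1 + k - k) = true by lia.
have -> : (1 + k - k) = 1 :> int by lia.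
rewrite !halfE !simpC => H.
apply: (@cancel2 _ _ _ (1 - 2 * k)); first lia.
exact: esym H.
Qed.

Lemma psiF k : psi (Y R k) = lam *: Y R k + (psi (Y R k))@_(GM,0) *: M R 0.
Proof.
apply/malgP => -[[] j].
- by rewrite [RHS]coefYM_L psiL.
- rewrite [RHS]coefYM_Y; case: (eqVneq j k) => [->|hjk].
    by rewrite psiYk ?eqxx !simpC.
  by rewrite psiY // ?eq_sym ?(negbTE hjk) !simpC.
- rewrite [RHS]coefYM_M; case: (eqVneq j 0) => [->|hj].
    by rewrite ?eqxx !simpC.
  by rewrite psiM // ?eq_sym ?(negbTE hj) !simpC.
Qed.

Lemma rho3L n : rho3 (L R n) = 0.
Proof.
have hv : (psi (Y R 0))@_(GY, -n) = lam * ((0:int) == -n)%:R.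
  by rewrite {1}psiF coefYM_Y.
have hv' : lam * ((0:int) == -n)%:R * (n%:~R / 2%:R - (-n)%:~R) = 0.
  case: (eqVneq n 0) => [->|hn]; first by rewrite !simpC.
  have -> : ((0:int) == -n) = false by lia.
  by rewrite !simpC.
have := EqA_GY n 0 (-n).
rewrite hv hv'.
have -> : (n + - n - 0) = 0 :> int by lia.
have -> : ((0:int) == n + - n) = true by lia.
by rewrite !simpC.
Qed.

Lemma phiL k j : (phi (Y R k))@_(GL,j) = 0.
Proof.
apply: (@cancel_int' _ _ (j - (j + 1))); first lia.
exact: (EqB_GL (j+1) k j).
Qed.

Lemma rho1Y k : rho1 (Y R k) = 0.
Proof.
have := EqB_GM 0 k 0.
have -> : ((0:int) == 0 + 0) = true by lia.
by rewrite !simpC.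
Qed.

Lemma rho2Y k : rho2 (Y R k) = 0.
Proof.
have := EqB_GM 1 k 0.
have -> : ((1:int) == 1 + 0) = true by lia.
by rewrite rho1Y !simpC.
Qed.

Lemma phiM k j : j != 0 -> (phi (Y R k))@_(GM,j) = 0.
Proof.
move=> hj; apply: (@cancel_intN _ _ (- j)); first lia.
have := EqB_GM 0 k j.
have -> : (0 == 0 + j) = false by lia.
by rewrite !simpC.
Qed.

Lemma phiY k j : j != k -> (phi (Y R k))@_(GY,j) = 0.
Proof.
move=> hjk.
have [m [h1 h2]] : exists m : int, (k == m + j) = false /\ (m - 2 * j != 0).
  case: (boolP (k == 3 * j + 1)) => h; [exists (2*j+2) | exists (2*j+1)]; split; lia.
apply: (@cancel_halfN _ _ (m - 2 * j) h2).
have := EqB_GY m k j.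
have h3 : (m == m + j - k) = false by lia.
by rewrite h1 h3 !halfE !simpC.
Qed.

Lemma phiYk k : (phi (Y R k))@_(GY,k) = lam.
Proof.
have := EqB_GY 1 k k.
have -> : (k == 1 + k) = false by lia.
have -> : ((1:int) == 1 + k - k) = true by lia.
have -> : (1 + k - k) = 1 :> int by lia.
rewrite !halfE !simpC !mulrN => /oppr_inj H.
apply: (@cancel2 _ _ _ (1 - 2 * k)); first lia.
exact: H.
Qed.

Lemma phiF k : phi (Y R k) = lam *: Y R k + (phi (Y R k))@_(GM,0) *: M R 0.
Proof.
apply/malgP => -[[] j].
- by rewrite [RHS]coefYM_L phiL.
- rewrite [RHS]coefYM_Y; case: (eqVneq j k) => [->|hjk].
    by rewrite phiYk ?eqxx !simpC.
  by rewrite phiY // ?eq_sym ?(negbTE hjk) !simpC.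
- rewrite [RHS]coefYM_M; case: (eqVneq j 0) => [->|hj].
    by rewrite ?eqxx !simpC.
  by rewrite phiM // ?eq_sym ?(negbTE hj) !simpC.
Qed.

Lemma th3L n : th3 (L R n) = 0.
Proof.
have hv : (phi (Y R 0))@_(GY, -n) = lam * ((0:int) == -n)%:R.
  by rewrite {1}phiF coefYM_Y.
have hv' : lam * ((0:int) == -n)%:R * - (n%:~R / 2%:R - (-n)%:~R) = 0.
  case: (eqVneq n 0) => [->|hn]; first by rewrite !simpC.
  have -> : ((0:int) == -n) = false by lia.
  by rewrite !simpC.
have := EqB_GY n 0 (-n).
rewrite hv hv'.
have -> : (n + - n - 0) = 0 :> int by lia.
have -> : ((0:int) == n + - n) = true by lia.
by rewrite !simpC.
Qed.

Lemma EqC_GY n k p : rho3 (Y R n) * (k == p)%:R = th3 (Y R k) * (n == p)%:R.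
Proof.
have e1 : (Y R k)@_(GY, p) = (k == p)%:R by rewrite /Y cb.
have e2 : (lie (phi (Y R n)) (Y R k))@_(GY, p) = 0 by rewrite cYr_Y phiL mul0r.
have e3 : (Y R n)@_(GY, p) = (n == p)%:R by rewrite /Y cb.
have e4 : (lie (Y R n) (psi (Y R k)))@_(GY, p) = 0 by rewrite cYl_Y psiL mul0r.
have := useC (EqC n k (GY,p)) e1 e2 e3 e4.
by rewrite !addr0.
Qed.

Lemma rho3Y n : rho3 (Y R n) = 0.
Proof.
have := EqC_GY n (n+1) (n+1).
have -> : (n == n + 1) = false by lia.
by rewrite eqxx !simpC.
Qed.

Lemma th3Y n : th3 (Y R n) = 0.
Proof.
have := EqC_GY (n+1) n (n+1).
have -> : (n == n + 1) = false by lia.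
by rewrite eqxx !simpC.
Qed.

Lemma all_in_one n :
    (exists c r : C,
       phi (Y R n) = lam *: Y R n + c *: M R 0 /\
       psi (Y R n) = lam *: Y R n + r *: M R 0) /\
    [/\ rho1 (Y R n) = 0, rho2 (Y R n) = 0 & rho3 (Y R n) = 0] /\
    [/\ th1 (Y R n) = 0, th2 (Y R n) = 0 & th3 (Y R n) = 0] /\
    rho3 (L R n) = 0 /\ th3 (L R n) = 0.
Proof.
split; first by exists ((phi (Y R n))@_(GM,0)), ((psi (Y R n))@_(GM,0)); split; [exact: phiF | exact: psiF].
split; first by split; [exact: rho1Y | exact: rho2Y | exact: rho3Y].
split; first by split; [exact: th1Y | exact: th2Y | exact: th3Y].
by split; [exact: rho3L | exact: th3L].
Qed.
End Main.

Theorem lemma3p3 (R : rcfType) (f : SV0 R -> SV0 R -> SV0 R)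
  (phi psi : SV0 R -> SV0 R)
  (rho1 rho2 rho3 theta1 theta2 theta3 : SV0 R -> complex R)
  (lam : complex R) :
  is_biderivation f ->
  is_linmap phi -> is_linmap psi ->
  is_linfun rho1 -> is_linfun rho2 -> is_linfun rho3 ->
  is_linfun theta1 -> is_linfun theta2 -> is_linfun theta3 ->
  (forall x y, f x y =
     rho1 x *: D1 y + rho2 x *: D2 y + rho3 x *: D3 y + lie (phi x) y) ->
  (forall x y, f x y =
     theta1 y *: D1 x + theta2 y *: D2 x + theta3 y *: D3 x + lie x (psi y)) ->
  (forall m : int, inMM (phi (L R m) - lam *: L R m)) ->
  (forall m : int, inMM (psi (L R m) - lam *: L R m)) ->
  forall n : int,
    (exists c r : complex R,
       phi (Y R n) = lam *: Y R n + c *: M R 0 /\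
       psi (Y R n) = lam *: Y R n + r *: M R 0) /\
    [/\ rho1 (Y R n) = 0, rho2 (Y R n) = 0 & rho3 (Y R n) = 0] /\
    [/\ theta1 (Y R n) = 0, theta2 (Y R n) = 0 & theta3 (Y R n) = 0] /\
    rho3 (L R n) = 0 /\ theta3 (L R n) = 0.
Proof.
move=> _ _ _ _ _ _ _ _ _ H1 H2 Hphi Hpsi n.
exact: (@all_in_one R phi psi rho1 rho2 rho3 theta1 theta2 theta3 lam
  (fun x y => etrans (esym (H1 x y)) (H2 x y)) Hphi Hpsi n).
Qed.
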